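(* For any $1\leq i<j\leq n$ and any subspace $L$ of $\bigwedge^{k}V$, we have $N_{j\to i}N_{j\to i}N_{j\to i}L=N_{j\to i}N_{j\to i}L$. Moreover, if $L$ is monomial with respect to $e_j$, i.e. $L=\big(L\cap\bigwedge^{k}V^{(j)}\big)\oplus\big(L\cap(e_{j}\wedge\bigwedge^{k-1}V^{(j)})\big)$, then $N_{j\to i}N_{j\to i}L=N_{j\to i}L$.
   Context: $\mathbb{F}$ is a field (assumed throughout the paper, for expository purposes, to have characteristic not $2$), $V$ is an $n$-dimensional $\mathbb{F}$-vector space with a fixed basis $e_1,\dots,e_n$, and $\bigwedge V$ its exterior algebra. For $j\in[n]$, $V^{(j)}$ is the span of $\{e_h:h\neq j\}$, and $\bigwedge V^{(j)}$ is viewed as a subalgebra of $\bigwedge V$. Slow shift: for distinct $i,j\in[n]$ and nonzero $m\in\bigwedge^kV$, write uniquely $m=x+e_j\wedge y$ with $x\in\bigwedge^kV^{(j)}$, $y\in\bigwedge^{k-1}V^{(j)}$, and set $N_{j\to i}m=x+e_i\wedge y$ if this is nonzero, and $N_{j\to i}m=e_j\wedge y$ otherwise (the limit as $t\to0$ of the projective action of the linear map $e_j\mapsto e_i+te_j$ fixing the other $e_h$). For a subspace $L$ of $\bigwedge^kV$, $N_{j\to i}L$ is the span of $\{N_{j\to i}m:m\in L\setminus\{0\}\}$; it has the same dimension as $L$. *)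

(* Defs.v *)
From HB Require Import structures.
From mathcomp Require Import all_boot all_order all_algebra.
Set Implicit Arguments. Unset Strict Implicit. Unset Printing Implicit Defensive.
Import GRing.Theory.
Local Open Scope ring_scope.

(* The exterior algebra /\V of V = F^n, with basis e_S (S a subset of [n],
   e_S = e_{s_1} /\ ... /\ e_{s_k} for s_1 < ... < s_k), is represented by the
   coefficient functions {set 'I_n} -> F.  /\^k V = those supported on #|S| = k. *)
Definition ext (F : fieldType) (n : nat) := {ffun {set 'I_n} -> F^o}.

Section Ext.
Variables (F : fieldType) (n : nat).
Local Notation W := (ext F n).

(* sign of e_j /\ e_S for j notin S : (-1)^#{s in S | s < j} *)
Definition wsign (j : 'I_n) (S : {set 'I_n}) : F :=
  (-1) ^+ #|[set s in S | (s < j)%N]|.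

Definition wedge_e (j : 'I_n) (y : W) : W :=
  [ffun T : {set 'I_n} => if j \in T then wsign j T * y (T :\ j) else 0].

(* m = x + e_j /\ y with x, y in /\V^(j) *)
Definition xpart (j : 'I_n) (m : W) : W :=
  [ffun S : {set 'I_n} => if j \in S then 0 else m S].
Definition ypart (j : 'I_n) (m : W) : W :=
  [ffun S : {set 'I_n} => if j \in S then 0 else wsign j S * m (S :|: [set j])].

Definition slow_shift (j i : 'I_n) (m : W) : W :=
  let v := xpart j m + wedge_e i (ypart j m) in
  if v != 0 then v else wedge_e j (ypart j m).

Definition avoids (j : 'I_n) (w : W) : Prop := forall S : {set 'I_n}, j \in S -> w S = 0.
Definition through (j : 'I_n) (w : W) : Prop := forall S : {set 'I_n}, j \notin S -> w S = 0.

Definition homog (k : nat) (w : W) : Prop := forall S : {set 'I_n}, w S != 0 -> #|S| = k.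

(* N_{j->i} of a set P of vectors (given as a predicate): the span of
   { N_{j->i} m : m in P, m <> 0 }, i.e. the intersection of all subspaces
   containing these vectors (membership predicate). *)
Definition shiftSpan (j i : 'I_n) (P : W -> Prop) : W -> Prop :=
  fun w => forall U : {vspace W},
      (forall m, P m -> m != 0 -> slow_shift j i m \in U) -> w \in U.

Definition inL (L : {vspace W}) : W -> Prop := fun w => w \in L.

Definition monomial_wrt (j : 'I_n) (L : {vspace W}) : Prop :=
  forall m, m \in L -> exists x y : W,
      [/\ x \in L, y \in L, avoids j x, through j y & m = x + y].
End Ext.

(* Main.v *)
Require Import Defs.
From HB Require Import structures.
From mathcomp Require Import all_boot all_order all_algebra.
Set Implicit Arguments. Unset Strict Implicit. Unset Printing Implicit Defensive.
Import GRing.Theory.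
Local Open Scope ring_scope.

Section S.
Variables (F : fieldType) (n : nat) (i j : 'I_n).
Hypothesis ij : i != j.
Local Notation W := (ext F n).

Definition phi (m : W) : W := xpart j m + wedge_e i (ypart j m).
Definition EY (m : W) : W := wedge_e j (ypart j m).

Lemma xpart_lin : linear (xpart (F:=F) j).
Proof. move=> a u v; apply/ffunP=> S; rewrite !ffunE; case: ifP => _ //.
by rewrite scaler0 addr0. Qed.
Lemma ypart_lin : linear (ypart (F:=F) j).
Proof. move=> a u v; apply/ffunP=> S; rewrite !ffunE; case: ifP => _.
  by rewrite scaler0 addr0.
by rewrite mulrDr; congr (_ + _); rewrite [LHS]mulrCA.
Qed.
Lemma wedge_lin (k : 'I_n) : linear (wedge_e (F:=F) k).
Proof. move=> a u v; apply/ffunP=> S; rewrite !ffunE; case: ifP => _; last first.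
  by rewrite scaler0 addr0.
by rewrite mulrDr; congr (_ + _); rewrite [LHS]mulrCA.
Qed.
Lemma phi_lin : linear phi.
Proof. move=> a u v; rewrite /phi xpart_lin ypart_lin wedge_lin.
by rewrite scalerDr -!addrA; congr (_ + _); rewrite addrCA. Qed.
Lemma EY_lin : linear EY.
Proof. by move=> a u v; rewrite /EY ypart_lin wedge_lin. Qed.

HB.instance Definition _ := GRing.isLinear.Build F W W *:%R phi phi_lin.
HB.instance Definition _ := GRing.isLinear.Build F W W *:%R EY EY_lin.

Definition NL (L : {vspace W}) : {vspace W} :=
  (linfun phi @: L + linfun EY @: (L :&: lker (linfun phi)))%VS.

Lemma memNL L w : w \in NL L <->
  exists a b, [/\ a \in L, b \in L, phi b = 0 & w = phi a + EY b].
Proof.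
split.
  move=> /memv_addP [u /memv_imgP [a aL ->] [v /memv_imgP [b] ] ].
  rewrite memv_cap memv_ker => /andP[bL] /eqP; rewrite !lfunE /= => pb -> ->.
  by exists a, b; split => //; rewrite !lfunE.
move=> [a [b [aL bL pb ->]]]; apply: memv_add.
  by rewrite -[phi a](@lfunE _ _ _ phi) memv_img.
by rewrite -[EY b](@lfunE _ _ _ EY) memv_img // memv_cap bL memv_ker lfunE /= pb.
Qed.

Lemma wedge0 (k : 'I_n) : wedge_e k (0 : W) = 0.
Proof. by apply/ffunP=> S; rewrite !ffunE; case: ifP; rewrite ?mulr0. Qed.
Lemma avoid_x (v : W) : avoids j v -> xpart j v = v.
Proof. by move=> h; apply/ffunP=> S; rewrite !ffunE; case: ifP => // /h ->. Qed.
Lemma avoid_y (v : W) : avoids j v -> ypart j v = 0.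
Proof. move=> h; apply/ffunP=> S; rewrite !ffunE; case: ifP => // _.
by rewrite h ?mulr0 // !inE eqxx orbT. Qed.
Lemma avoid_xpart (m : W) : avoids j (xpart j m).
Proof. by move=> S jS; rewrite ffunE jS. Qed.
Lemma avoid_ypart (m : W) : avoids j (ypart j m).
Proof. by move=> S jS; rewrite ffunE jS. Qed.
Lemma avoid_wedge_i (v : W) : avoids j v -> avoids j (wedge_e i v).
Proof. move=> h S jS; rewrite ffunE; case: ifP => // _.
by rewrite h ?mulr0 // !inE jS andbT eq_sym. Qed.
Lemma avoidD (u v : W) : avoids j u -> avoids j v -> avoids j (u + v).
Proof. by move=> hu hv S jS; rewrite ffunE hu // hv // addr0. Qed.
Lemma avoid_phi (m : W) : avoids j (phi m).
Proof. exact/avoidD/avoid_wedge_i/avoid_ypart/avoid_xpart. Qed.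
Lemma phi_avoid (v : W) : avoids j v -> phi v = v.
Proof. by move=> h; rewrite /phi avoid_x // avoid_y // wedge0 addr0. Qed.
Lemma x_wedge_j (y : W) : xpart j (wedge_e j y) = 0.
Proof. by apply/ffunP=> S; rewrite !ffunE; case: ifP => // ->. Qed.
Lemma y_wedge_j (y : W) : ypart j (wedge_e j y) = xpart j y.
Proof.
apply/ffunP=> S; rewrite !ffunE; case: ifP => // /negbT jS.
rewrite !inE eqxx orbT.
have -> : (S :|: [set j]) :\ j = S.
  apply/setP=> s; rewrite !inE; case: eqVneq => [->|] //=; first by rewrite (negbTE jS).
  by rewrite orbF.
have -> : wsign F j (S :|: [set j]) = wsign F j S.
  rewrite /wsign; congr (_ ^+ _); apply: eq_card => s; rewrite !inE.
  by case: eqVneq => [->|]; rewrite ?ltnn ?andbF ?orbF.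
by rewrite mulrA -expr2 sqrr_sign mul1r.
Qed.
Lemma through_EY (b : W) : through j (EY b).
Proof. by move=> S jS; rewrite ffunE (negbTE jS). Qed.
Lemma through_x (y : W) : through j y -> xpart j y = 0.
Proof. by move=> h; apply/ffunP=> S; rewrite !ffunE; case: ifP => // /negbT /h. Qed.
Lemma ypart_EY (b : W) : ypart j (EY b) = ypart j b.
Proof. by rewrite /EY y_wedge_j avoid_x //; exact: avoid_ypart. Qed.
Lemma phi_EY (b : W) : phi (EY b) = wedge_e i (ypart j b).
Proof. by rewrite /phi ypart_EY /EY x_wedge_j add0r. Qed.
Lemma EY_phi (a : W) : EY (phi a) = 0.
Proof. by rewrite /EY avoid_y ?wedge0 //; exact: avoid_phi. Qed.
Lemma phi_phi (a : W) : phi (phi a) = phi a.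
Proof. by rewrite phi_avoid //; exact: avoid_phi. Qed.
Lemma phi_xpart (b : W) : phi (xpart j b) = xpart j b.
Proof. by rewrite phi_avoid //; exact: avoid_xpart. Qed.
Lemma phiD (a b : W) : phi (a + b) = phi a + phi b. Proof. exact: raddfD. Qed.
Lemma phiB (a b : W) : phi (a - b) = phi a - phi b. Proof. exact: raddfB. Qed.
Lemma EYD (a b : W) : EY (a + b) = EY a + EY b. Proof. exact: raddfD. Qed.
Lemma phi0 : phi 0 = 0. Proof. exact: raddf0. Qed.
Lemma EY0 : EY 0 = 0. Proof. exact: raddf0. Qed.
Lemma EY_EY (b : W) : EY (EY b) = EY b.
Proof. by rewrite {1}/EY ypart_EY. Qed.
Lemma slow_shiftE (m : W) : slow_shift j i m = if phi m != 0 then phi m else EY m.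
Proof. by []. Qed.

Lemma xpart_mono (L : {vspace W}) (b : W) : monomial_wrt j L -> b \in L -> xpart j b \in L.
Proof.
move=> mL /mL [x [y [xL yL ax ty ->]]].
have -> : xpart j (x + y) = xpart j x + xpart j y.
  by apply/ffunP=> S; rewrite !ffunE; case: ifP; rewrite ?addr0.
by rewrite avoid_x // through_x // addr0.
Qed.

Lemma NL_monomial (L : {vspace W}) : monomial_wrt j (NL L).
Proof.
move=> w /memNL [a [b [aL bL pb ->]]]; exists (phi a), (EY b); split => //.
- by apply/memNL; exists a, 0; split; rewrite ?mem0v ?phi0 ?EY0 ?addr0.
- by apply/memNL; exists 0, b; split; rewrite ?mem0v ?phi0 ?add0r.
- exact: avoid_phi.
- exact: through_EY.
Qed.

Lemma NLNL (L : {vspace W}) (w : W) : monomial_wrt j L -> (w \in NL (NL L)) <-> (w \in NL L).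
Proof.
move=> mL; split.
  move=> /memNL [u [c [/memNL [a [b [aL bL pb ->]]] /memNL [a' [b' [aL' bL' pb' ->]]] pc ->]]].
  apply/memNL; exists (a - xpart j b), b'; split => //.
    by rewrite memvB // xpart_mono.
  rewrite (phiD (phi a) (EY b)) (EYD (phi a') (EY b')) (phiB a (xpart j b)).
  rewrite phi_phi phi_EY EY_phi EY_EY add0r phi_xpart.
  move: pb; rewrite /phi => /eqP; rewrite addr_eq0 => /eqP ->.
  by rewrite opprK.
move=> /memNL [a [b [aL bL pb ->]]].
apply/memNL; exists (phi a), (phi (xpart j b) + EY b); split.
- by apply/memNL; exists a, 0; split; rewrite ?mem0v ?phi0 ?EY0 ?addr0.
- by apply/memNL; exists (xpart j b), b; split; rewrite ?xpart_mono.
- by rewrite (phiD (phi (xpart j b)) (EY b)) phi_phi phi_xpart phi_EY.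
- by rewrite phi_phi (EYD (phi (xpart j b)) (EY b)) EY_phi EY_EY add0r.
Qed.

Lemma ss_ext (P Q : W -> Prop) : (forall m, P m <-> Q m) ->
  forall w, shiftSpan j i P w <-> shiftSpan j i Q w.
Proof.
move=> hPQ w; split => h U hU; apply: h => m /hPQ Pm m0; exact: hU.
Qed.

Lemma ss_NL (L : {vspace W}) (w : W) : shiftSpan j i (inL L) w <-> inL (NL L) w.
Proof.
split.
  move=> h; apply: h => m mL m0; rewrite slow_shiftE; case: ifP => [_|/negbFE/eqP pm].
    by apply/memNL; exists m, 0; split; rewrite ?mem0v ?phi0 ?EY0 ?addr0.
  by apply/memNL; exists 0, m; split; rewrite ?mem0v ?phi0 ?add0r.
move=> /memNL [a [b [aL bL pb ->]]] U hU; apply: memvD.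
  have [->|pa] := eqVneq (phi a) 0; first exact: mem0v.
  have a0 : a != 0 by apply: contraNneq pa => ->; rewrite phi0.
  by have := hU a aL a0; rewrite slow_shiftE pa.
have [->|b0] := eqVneq b 0; first by rewrite EY0 mem0v.
by have := hU b bL b0; rewrite slow_shiftE pb eqxx.
Qed.
End S.


Theorem corollary3p7 (F : fieldType) (n k : nat) (i j : 'I_n)
    (L : {vspace ext F n}) :
  (2%:R : F) != 0 ->
  (i < j)%N ->
  (forall m, m \in L -> homog k m) ->
  (forall w, shiftSpan j i (shiftSpan j i (shiftSpan j i (inL L))) w
             <-> shiftSpan j i (shiftSpan j i (inL L)) w)
  /\
  (monomial_wrt j L ->
   forall w, shiftSpan j i (shiftSpan j i (inL L)) w
             <-> shiftSpan j i (inL L) w).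
Proof.
move=> _ lij _.
have ij : i != j by apply/eqP => e; move: lij; rewrite e ltnn.
have e1 := ss_NL i j L.
have e2 : forall w, shiftSpan j i (shiftSpan j i (inL L)) w <-> inL (NL i j (NL i j L)) w.
  by move=> w; apply: iff_trans (ss_ext i j e1 w) (ss_NL i j _ w).
have e3 : forall w, shiftSpan j i (shiftSpan j i (shiftSpan j i (inL L))) w
                    <-> inL (NL i j (NL i j (NL i j L))) w.
  by move=> w; apply: iff_trans (ss_ext i j e2 w) (ss_NL i j _ w).
split.
  move=> w; apply: iff_trans (e3 w) _; apply: iff_trans _ (iff_sym (e2 w)).
  exact (NLNL ij w (NL_monomial ij (L:=L))).
move=> mL w; apply: iff_trans (e2 w) _; apply: iff_trans _ (iff_sym (e1 w)).
exact (NLNL ij w mL).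
Qed.
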